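(* Let $X=X_\sigma$ be the root monoid associated with a cone $\sigma$, a $k$-dimensional regular face $\tau$ with primitive ray generators $p_1,\ldots,p_k$, and a compatible set of Demazure roots $\{e_1^{(r)},e_2^{(r)}\}_{r=1}^k$, and assume the vectors $e_2^{(1)}-e_1^{(1)},\ldots,e_2^{(k)}-e_1^{(k)}$ are linearly independent (i.e. the group of invertible elements is active). Then the center $Z(X)=\{x\in X: x*y=y*x\ \forall y\in X\}$ equals $$Z(X)=\overline{O_\tau}\cap\{x\in X:\chi^{u+e_1^{(r)}}(x)=\chi^{u+e_2^{(r)}}(x)\ \text{for all }(r,u)\in I\},$$ where $I=\{(r,u): r\in\{1,\ldots,k\},\ u\in S_\sigma,\ \langle p_j,u\rangle=\delta_{jr}\ \text{for all } j=1,\ldots,k\}$.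
   Context: $\mathbb{K}$ algebraically closed of characteristic zero; $N$ lattice, $M$ dual, $S_\sigma=\sigma^\vee\cap M$, $X_\sigma=\operatorname{Spec}\bigoplus_{u\in S_\sigma}\mathbb{K}\chi^u$. $O_\tau$ is the torus orbit consisting of points $x$ with $\chi^u(x)\ne0$ iff $u\in\tau^\perp$; its closure $\overline{O_\tau}$ is the set of $x$ with $\chi^u(x)=0$ for all $u\in S_\sigma\setminus\tau^\perp$. Regular face: primitive ray generators extend to a basis of $N$. Demazure root for ray generator $p_i$ of $\sigma$: $e\in M$, $\langle p_i,e\rangle=-1$, $\langle p_j,e\rangle\ge0$ for the other ray generators. Compatibility: $\langle p_s,e_1^{(r)}\rangle=\langle p_s,e_2^{(r)}\rangle=-\delta_{rs}$. The root monoid is $X_\sigma$ with multiplication $\chi^u(x*y)=\sum_{\bar i+\bar j=\langle\bar p,u\rangle}\prod_r\binom{\langle p_r,u\rangle}{i_r}\chi^{u+\sum_ri_re_2^{(r)}}(x)\chi^{u+\sum_rj_re_1^{(r)}}(y)$, with $\langle\bar p,u\rangle=(\langle p_1,u\rangle,\ldots,\langle p_k,u\rangle)$ (dual to the comultiplication $\chi^u\mapsto\chi^u\otimes\chi^u\prod_r(1\otimes\chi^{e_1^{(r)}}+\chi^{e_2^{(r)}}\otimes1)^{\langle p_r,u\rangle}$). *)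

(* Defs.v *)
From mathcomp Require Import all_boot all_order all_algebra.
Set Implicit Arguments. Unset Strict Implicit. Unset Printing Implicit Defensive.
Import Order.TTheory GRing.Theory Num.Theory.
Local Open Scope ring_scope.

(* Lattices N = M = Z^n, realized as integer row vectors; pairing = dot product. *)
Definition lvec (n : nat) := 'rV[int]_n.

Definition pair {n} (v u : lvec n) : int := \sum_(i < n) v 0 i * u 0 i.

Definition toQ {n} (v : lvec n) : 'rV[rat]_n := map_mx (fun z : int => z%:~R) v.

(* primitive lattice vector: not a proper integer multiple (implies v <> 0) *)
Definition primitive {n} (v : lvec n) : Prop :=
  forall (d : int) (w : lvec n), v = d *: w -> `|d| = 1.

(* All ray generators of sigma: the rays p (of the face tau) followed by q. *)
Definition rays {n k l} (p : 'I_k -> lvec n) (q : 'I_l -> lvec n)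
  (i : 'I_(k + l)) : lvec n :=
  match split i with inl r => p r | inr j => q j end.

(* R is exactly the list of primitive ray generators of a strongly convex
   rational polyhedral cone sigma = cone(R). *)
Definition ray_generators {n m} (R : 'I_m -> lvec n) : Prop :=
  [/\ forall i, primitive (R i),
      (forall c : 'I_m -> rat, (forall i, 0 <= c i) ->
         \sum_i c i *: toQ (R i) = 0 -> forall i, c i = 0)
    &
      (forall i, ~ exists c : 'I_m -> rat,
         [/\ forall j, 0 <= c j, c i = 0 & toQ (R i) = \sum_j c j *: toQ (R j)])].

Definition inS {n m} (R : 'I_m -> lvec n) (u : lvec n) : bool :=
  [forall i, 0 <= pair (R i) u].

Definition is_face {n k l} (p : 'I_k -> lvec n) (q : 'I_l -> lvec n) : Prop :=
  exists m0 : lvec n, (forall r, pair (p r) m0 = 0) /\ (forall j, 0 < pair (q j) m0).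

(* regular face: p_1..p_k extend to a basis of N (rows of a unimodular matrix) *)
Definition regular {n k} (p : 'I_k -> lvec n) : Prop :=
  exists A : 'M[int]_n, A \in unitmx /\ forall r, exists i, row i A = p r.

Definition compatible_roots {n k l} (p : 'I_k -> lvec n) (q : 'I_l -> lvec n)
  (e1 e2 : 'I_k -> lvec n) : Prop :=
  forall r,
    [/\ forall s, pair (p s) (e1 r) = - (r == s)%:~R,
        forall s, pair (p s) (e2 r) = - (r == s)%:~R,
        forall j, 0 <= pair (q j) (e1 r)
      & forall j, 0 <= pair (q j) (e2 r)].

Definition lin_indep {n k} (v : 'I_k -> lvec n) : Prop :=
  forall c : 'I_k -> int, \sum_r c r *: v r = 0 -> forall r, c r = 0.

(* K-points of X_sigma = Spec K[S_sigma]: monoid morphisms (S_sigma,+) -> (K,.),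
   extended by 0 outside S_sigma so that x u = chi^u(x). *)
Definition is_point {K : fieldType} {n m} (R : 'I_m -> lvec n)
  (x : lvec n -> K) : Prop :=
  [/\ x 0 = 1,
      forall u v, inS R u -> inS R v -> x (u + v) = x u * x v
    & forall u, ~~ inS R u -> x u = 0].

Definition rmul {K : fieldType} {n k l} (p : 'I_k -> lvec n) (q : 'I_l -> lvec n)
  (e1 e2 : 'I_k -> lvec n) (x y : lvec n -> K) (u : lvec n) : K :=
  let a := fun r => `|pair (p r) u|%N in
  let d := (\sum_(r < k) a r)%N in
  if inS (rays p q) u then
    \sum_(i : {ffun 'I_k -> 'I_d.+1} | [forall r, (i r <= a r)%N])
      (\prod_(r < k) ('C(a r, i r))%:R)
      * x (u + \sum_(r < k) e2 r *+ i r)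
      * y (u + \sum_(r < k) e1 r *+ (a r - i r))
  else 0.

(* Main.v *)
Require Import Defs.
From mathcomp Require Import all_boot all_order all_algebra.
From mathcomp Require Import zify.
From Stdlib Require Import FunctionalExtensionality.
Import Order.TTheory GRing.Theory Num.Theory.
Local Open Scope ring_scope.
Set Implicit Arguments. Unset Strict Implicit.

Lemma pairD n (v u w : lvec n) : pair v (u + w) = pair v u + pair v w.
Proof. by rewrite /pair -big_split /=; apply: eq_bigr => i _; rewrite mxE mulrDr. Qed.

Lemma pair0 n (v : lvec n) : pair v 0 = 0.
Proof. by rewrite /pair big1 // => i _; rewrite mxE mulr0. Qed.

Lemma pairN n (v u : lvec n) : pair v (- u) = - pair v u.
Proof. by rewrite /pair -sumrN; apply: eq_bigr => i _; rewrite mxE mulrN. Qed.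

Lemma pairMn n (v u : lvec n) m : pair v (u *+ m) = pair v u *+ m.
Proof. by elim: m => [|m IH]; rewrite ?mulr0n ?pair0 // !mulrS pairD IH. Qed.

Lemma pair_sum n k (v : lvec n) (F : 'I_k -> lvec n) :
  pair v (\sum_r F r) = \sum_r pair v (F r).
Proof.
elim/big_rec2: _ => [|i y1 y2 _ <-]; first exact: pair0.
by rewrite pairD.
Qed.

Definition G {n k} (e1 e2 : 'I_k -> lvec n) (u : lvec n) (m2 m1 : 'I_k -> nat) :=
  u + \sum_r (e2 r *+ m2 r + e1 r *+ m1 r).

Lemma G_ext n k (e1 e2 : 'I_k -> lvec n) u m2 m1 m2' m1' :
  (forall s, m2 s = m2' s) -> (forall s, m1 s = m1' s) ->
  G e1 e2 u m2 m1 = G e1 e2 u m2' m1'.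
Proof. by move=> h2 h1; rewrite /G; congr (_ + _); apply: eq_bigr => s _; rewrite h1 h2. Qed.

Lemma sum_delta n k (e : 'I_k -> lvec n) r :
  \sum_s e s *+ (s == r) = e r.
Proof.
rewrite (bigD1 r) //= eqxx big1 ?addr0 // => s /negbTE ->; exact: mulr0n.
Qed.

Lemma G_add1 n k (e1 e2 : 'I_k -> lvec n) u m2 m1 r :
  G e1 e2 u m2 m1 + e1 r = G e1 e2 u m2 (fun s => (m1 s + (s == r))%N).
Proof.
rewrite /G -(sum_delta e1 r) -addrA -big_split /=; congr (_ + _).
by apply: eq_bigr => s _; rewrite mulrnDr addrA.
Qed.

Lemma G_add2 n k (e1 e2 : 'I_k -> lvec n) u m2 m1 r :
  G e1 e2 u m2 m1 + e2 r = G e1 e2 u (fun s => (m2 s + (s == r))%N) m1.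
Proof.
rewrite /G -(sum_delta e2 r) -addrA -big_split /=; congr (_ + _).
by apply: eq_bigr => s _; rewrite mulrnDr addrAC.
Qed.

Lemma rays_l n k l (p : 'I_k -> lvec n) (q : 'I_l -> lvec n) r :
  rays p q (lshift l r) = p r.
Proof. by rewrite /rays (unsplitK (inl r)). Qed.

Lemma rays_r n k l (p : 'I_k -> lvec n) (q : 'I_l -> lvec n) j :
  rays p q (rshift k j) = q j.
Proof. by rewrite /rays (unsplitK (inr j)). Qed.

Lemma inS_p n k l (p : 'I_k -> lvec n) (q : 'I_l -> lvec n) u r :
  inS (rays p q) u -> 0 <= pair (p r) u.
Proof. by move=> /forallP /(_ (lshift l r)); rewrite rays_l. Qed.

Lemma inS_q n k l (p : 'I_k -> lvec n) (q : 'I_l -> lvec n) u j :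
  inS (rays p q) u -> 0 <= pair (q j) u.
Proof. by move=> /forallP /(_ (rshift k j)); rewrite rays_r. Qed.

Lemma inSP n k l (p : 'I_k -> lvec n) (q : 'I_l -> lvec n) u :
  (forall r, 0 <= pair (p r) u) -> (forall j, 0 <= pair (q j) u) ->
  inS (rays p q) u.
Proof. by move=> hp hq; apply/forallP => i; rewrite /rays; case: (split i). Qed.
Lemma G_pair_p n k l (p : 'I_k -> lvec n) (q : 'I_l -> lvec n) e1 e2 u m2 m1 s :
  compatible_roots p q e1 e2 ->
  pair (p s) (G e1 e2 u m2 m1) = pair (p s) u - (m2 s + m1 s)%:R.
Proof.
move=> hr; rewrite /G pairD pair_sum; congr (_ + _).
rewrite (bigD1 s) //= big1 ?addr0.
  case: (hr s) => h1 h2 _ _.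
  by rewrite pairD !pairMn h1 h2 eqxx /= intz -mulrnDr mulNrn.
move=> r /negbTE rs; case: (hr r) => h1 h2 _ _.
by rewrite pairD !pairMn h1 h2 rs /= intz oppr0 !mul0rn addr0.
Qed.

Lemma G_pair_q n k l (p : 'I_k -> lvec n) (q : 'I_l -> lvec n) e1 e2 u m2 m1 j :
  compatible_roots p q e1 e2 -> 0 <= pair (q j) u ->
  0 <= pair (q j) (G e1 e2 u m2 m1).
Proof.
move=> hr hu; rewrite /G pairD pair_sum addr_ge0 // sumr_ge0 // => r _.
case: (hr r) => _ _ h1 h2.
by rewrite pairD !pairMn addr_ge0 // mulrn_wge0.
Qed.

Lemma G_inS n k l (p : 'I_k -> lvec n) (q : 'I_l -> lvec n) e1 e2 u m2 m1 :
  compatible_roots p q e1 e2 -> inS (rays p q) u ->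
  (forall s, (m2 s + m1 s <= `|pair (p s) u|)%N) ->
  inS (rays p q) (G e1 e2 u m2 m1).
Proof.
move=> hr hu hm; apply: inSP => [s|j]; last exact: G_pair_q (inS_q _ hu).
rewrite (G_pair_p _ _ _ _ hr) subr_ge0 -(gez0_abs (inS_p _ hu)).
by rewrite natz lez_nat hm.
Qed.
Lemma G_e2 n k (e1 e2 : 'I_k -> lvec n) u m :
  u + \sum_r e2 r *+ m r = G e1 e2 u m (fun _ => 0%N).
Proof. by rewrite /G; congr (_ + _); apply: eq_bigr => r _; rewrite mulr0n addr0. Qed.

Lemma G_e1 n k (e1 e2 : 'I_k -> lvec n) u m :
  u + \sum_r e1 r *+ m r = G e1 e2 u (fun _ => 0%N) m.
Proof. by rewrite /G; congr (_ + _); apply: eq_bigr => r _; rewrite mulr0n add0r. Qed.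

Definition vanish {K : fieldType} {n k} (p : 'I_k -> lvec n) (x : lvec n -> K) :=
  forall w, (exists r, pair (p r) w != 0) -> x w = 0.

Lemma rmul_A (K : fieldType) n k l (p : 'I_k -> lvec n) (q : 'I_l -> lvec n) e1 e2
  (x y : lvec n -> K) u :
  compatible_roots p q e1 e2 -> vanish p x -> inS (rays p q) u ->
  rmul p q e1 e2 x y u =
  x (G e1 e2 u (fun r => `|pair (p r) u|%N) (fun _ => 0%N)) * y u.
Proof.
move=> hr hx hu; rewrite /rmul hu.
set a := fun r => `|pair (p r) u|%N.
set d := (\sum_(r < k) a r)%N.
have ha : forall r, (a r < d.+1)%N by move=> r; rewrite ltnS /d (bigD1 r) //= leq_addr.
pose i0 : {ffun 'I_k -> 'I_d.+1} := [ffun r => Ordinal (ha r)].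
rewrite (bigD1 i0) /=; last by apply/forallP => r; rewrite ffunE.
rewrite [X in _ + X]big1 ?addr0.
  rewrite [X in X * _ * _]big1 ?mul1r => [|r _]; last by rewrite ffunE /= binn.
  rewrite (G_e2 e1 e2) (G_ext _ _ _ (m2' := a) (m1' := fun _ => 0%N)) //; last by move=> s; rewrite ffunE.
  congr (_ * y _); rewrite big1 ?addr0 // => r _; rewrite ffunE /= subnn mulr0n //.
move=> i /andP [/forallP hi ni0].
have [r hir] : exists r, i r != a r :> nat.
  apply/existsP; apply: contraT; rewrite negb_exists => /forallP hall.
  case/negP: ni0; apply/eqP/ffunP => r; apply: val_inj; rewrite ffunE /=.
  by move: (hall r); rewrite negbK => /eqP.
rewrite (G_e2 e1 e2) hx ?mulr0 ?mul0r //; exists r.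
have hA : pair (p r) u = (`|pair (p r) u|%N)%:Z by rewrite gez0_abs // (inS_p r hu).
rewrite (G_pair_p _ _ _ _ hr) addn0 hA natz subr_eq0 eqz_nat.
move: (hi r) hir; rewrite /a; move: (`|pair (p r) u|%N) => A; lia.
Qed.

Lemma rmul_B (K : fieldType) n k l (p : 'I_k -> lvec n) (q : 'I_l -> lvec n) e1 e2
  (x y : lvec n -> K) u :
  compatible_roots p q e1 e2 -> vanish p y -> inS (rays p q) u ->
  rmul p q e1 e2 x y u =
  x u * y (G e1 e2 u (fun _ => 0%N) (fun r => `|pair (p r) u|%N)).
Proof.
move=> hr hy hu; rewrite /rmul hu.
set a := fun r => `|pair (p r) u|%N.
set d := (\sum_(r < k) a r)%N.
pose i0 : {ffun 'I_k -> 'I_d.+1} := [ffun r => ord0].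
rewrite (bigD1 i0) /=; last by apply/forallP => r; rewrite ffunE.
rewrite [X in _ + X]big1 ?addr0.
  rewrite [X in X * _ * _]big1 ?mul1r => [|r _]; last by rewrite ffunE /= bin0.
  rewrite (G_e1 e1 e2) (G_ext _ _ _ (m2' := fun _ => 0%N) (m1' := a)) //; last by move=> s; rewrite ffunE /= subn0.
  congr (x _ * _); rewrite big1 ?addr0 // => r _; rewrite ffunE /= mulr0n //.
move=> i /andP [/forallP hi ni0].
have [r hir] : exists r, i r != 0%N :> nat.
  apply/existsP; apply: contraT; rewrite negb_exists => /forallP hall.
  case/negP: ni0; apply/eqP/ffunP => r; apply: val_inj; rewrite ffunE /=.
  by move: (hall r); rewrite negbK => /eqP.
rewrite (G_e1 e1 e2) hy ?mulr0 ?mul0r //; exists r.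
have hA : pair (p r) u = (`|pair (p r) u|%N)%:Z by rewrite gez0_abs // (inS_p r hu).
rewrite (G_pair_p _ _ _ _ hr) add0n hA natz subr_eq0 eqz_nat.
move: (hi r) hir; move: (`|pair (p r) u|%N) => A; lia.
Qed.
Lemma chain (K : fieldType) n k l (p : 'I_k -> lvec n) (q : 'I_l -> lvec n) e1 e2
  (x : lvec n -> K) u :
  compatible_roots p q e1 e2 -> inS (rays p q) u ->
  (forall (r : 'I_k) (v : lvec n), inS (rays p q) v ->
      (forall j, pair (p j) v = (j == r)%:~R) ->
      x (v + e1 r) = x (v + e2 r)) ->
  x (G e1 e2 u (fun _ => 0%N) (fun r => `|pair (p r) u|%N)) =
  x (G e1 e2 u (fun r => `|pair (p r) u|%N) (fun _ => 0%N)).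
Proof.
move=> hr hu H2.
set a := fun r => `|pair (p r) u|%N.
have hA : forall r, pair (p r) u = (a r)%:Z.
  by move=> r; rewrite /a gez0_abs // (inS_p r hu).
suff: forall N c, (forall s, c s <= a s)%N -> (\sum_s (a s - c s) <= N)%N ->
  x (G e1 e2 u c (fun s => a s - c s)%N) = x (G e1 e2 u a (fun _ => 0%N)).
  move=> /(_ _ (fun _ => 0%N) _ (leqnn _)) <- //.
  by congr x; apply: G_ext => s //; rewrite subn0.
elim=> [|N IH] c hc hN; (case: (boolP [forall s, c s == a s]) =>
    [/forallP heq | /forallPn [r hcr]]).
- by congr x; apply: G_ext => s; move/eqP: (heq s) => ->; rewrite ?subnn.
- exfalso; move: hN; rewrite (bigD1 r) //=; move: (hc r) hcr; lia.
- by congr x; apply: G_ext => s; move/eqP: (heq s) => ->; rewrite ?subnn.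
have hlt : (c r < a r)%N by rewrite ltn_neqAle hcr hc.
pose m1 := fun s => (a s - c s - (s == r))%N.
pose c' := fun s => (c s + (s == r))%N.
have hv : inS (rays p q) (G e1 e2 u c m1).
  apply: G_inS => // s; rewrite -/(a s) /m1; move: (hc s); case: (s == r) => /=; lia.
have E := H2 r _ hv.
rewrite G_add1 G_add2 in E.
have -> : G e1 e2 u c (fun s => a s - c s)%N = G e1 e2 u c (fun s => m1 s + (s == r))%N.
  by apply: G_ext => // s; rewrite /m1; case: (eqVneq s r) => [->|_] /=; lia.
rewrite E.
- have -> : G e1 e2 u c' m1 = G e1 e2 u c' (fun s => a s - c' s)%N.
    by apply: G_ext => // s; rewrite /m1 /c' subnDA.
  apply: IH.
    move=> s; rewrite /c'; case: (eqVneq s r) => [->|_] /=; move: (hc s) hlt; lia.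
  have E1 : (\sum_s (a s - c s) = (a r - c r) + \sum_(s | s != r) (a s - c s))%N.
    by rewrite (bigD1 r).
  have E2 : (\sum_s (a s - c' s) = (a r - c' r) + \sum_(s | s != r) (a s - c s))%N.
    rewrite (bigD1 r) //; congr addn; apply: eq_bigr => s /negbTE hs.
    by rewrite /c' hs addn0.
  rewrite E2; move: hN; rewrite E1 /c' eqxx; lia.
move=> j; rewrite (G_pair_p _ _ _ _ hr) hA natz /m1.
move: (hc j) hlt; case: (eqVneq j r) => [->|/negbTE hj]; rewrite ?eqxx ?hj /= intz; lia.
Qed.
Lemma two_pow_eq1 (K : fieldType) (hK : [pchar K] =i pred0) (m : int) :
  (2:K) ^ m = 1 -> m = 0.
Proof.
have H : forall n, (2:K) ^+ n = 1 -> n = 0%N.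
  move=> n h; have h0 := (pcharf0P K).1 hK (2 ^ n - 1)%N.
  move: h0; rewrite natrB ?expn_gt0 // natrX h subrr eqxx => /esym/eqP.
  move/eqP; rewrite subn_eq0 => h1.
  have : (2 ^ n <= 2 ^ 0)%N by [].
  by rewrite leq_exp2l //; lia.
case: m => n /=.
  by rewrite -exprnP => /H ->.
by move/eqP; rewrite invr_eq1 => /eqP /H.
Qed.

Lemma two_neq0 (K : fieldType) (hK : [pchar K] =i pred0) : (2:K) != 0.
Proof. by rewrite ((pcharf0P K).1 hK 2). Qed.

Lemma inS0 n m (R : 'I_m -> lvec n) : inS R 0.
Proof. by apply/forallP => i; rewrite pair0. Qed.

Lemma inSD n m (R : 'I_m -> lvec n) u v : inS R u -> inS R v -> inS R (u + v).
Proof.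
move=> /forallP hu /forallP hv; apply/forallP => i; rewrite pairD addr_ge0 //.
Qed.

Definition y1 (K : fieldType) n m (R : 'I_m -> lvec n) (w : lvec n) : K :=
  if inS R w then 1 else 0.

Lemma y1_point (K : fieldType) n m (R : 'I_m -> lvec n) : is_point R (y1 K R).
Proof.
split; first by rewrite /y1 inS0.
  by move=> u v hu hv; rewrite /y1 inSD // hu hv mulr1.
by move=> u /negbTE hu; rewrite /y1 hu.
Qed.

Definition y0 (K : fieldType) n k l (p : 'I_k -> lvec n) (q : 'I_l -> lvec n) i0
  (w : lvec n) : K :=
  if inS (rays p q) w && [forall r, pair (p r) w == 0] then 2 ^ (w 0 i0) else 0.

Lemma y0_point (K : fieldType) (hK : [pchar K] =i pred0) n k l
  (p : 'I_k -> lvec n) (q : 'I_l -> lvec n) i0 : is_point (rays p q) (y0 K p q i0).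
Proof.
split.
- rewrite /y0 inS0 /=.
  have -> : [forall r, pair (p r) 0 == 0] by apply/forallP => r; rewrite pair0.
  by rewrite mxE expr0z.
- move=> u v hu hv.
  have hp : forall r, (pair (p r) (u + v) == 0) = (pair (p r) u == 0) && (pair (p r) v == 0).
    by move=> r; rewrite pairD paddr_eq0 // (inS_p r hu, inS_p r hv).
  rewrite /y0 inSD // hu hv /=.
  case: (boolP [forall r, pair (p r) u == 0]) => Hu;
    case: (boolP [forall r, pair (p r) v == 0]) => Hv.
  + have -> : [forall r, pair (p r) (u + v) == 0].
      apply/forallP => r; rewrite hp (forallP Hu r) (forallP Hv r) //.
    by rewrite mxE expfzDr // two_neq0.
  + have -> : [forall r, pair (p r) (u + v) == 0] = false.
      apply/negbTE; apply: contra Hv => /forallP h; apply/forallP => r.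
      by move: (h r); rewrite hp => /andP[].
    by rewrite mulr0.
  + have -> : [forall r, pair (p r) (u + v) == 0] = false.
      apply/negbTE; apply: contra Hu => /forallP h; apply/forallP => r.
      by move: (h r); rewrite hp => /andP[].
    by rewrite mul0r.
  + have -> : [forall r, pair (p r) (u + v) == 0] = false.
      apply/negbTE; apply: contra Hu => /forallP h; apply/forallP => r.
      by move: (h r); rewrite hp => /andP[].
    by rewrite mul0r.
- by move=> u /negbTE hu; rewrite /y0 hu.
Qed.

Lemma y0_vanish (K : fieldType) n k l (p : 'I_k -> lvec n) (q : 'I_l -> lvec n) i0 :
  vanish p (y0 K p q i0).
Proof.
move=> w [r hr]; rewrite /y0.
suff -> : [forall r, pair (p r) w == 0] = false by rewrite andbF.
by apply/negbTE/forallPn; exists r.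
Qed.

Lemma y0_val (K : fieldType) n k l (p : 'I_k -> lvec n) (q : 'I_l -> lvec n) i0 w :
  inS (rays p q) w -> (forall r, pair (p r) w = 0) -> y0 K p q i0 w = 2 ^ (w 0 i0).
Proof.
move=> hw hp; rewrite /y0 hw /=.
suff -> : [forall r, pair (p r) w == 0] by [].
by apply/forallP => r; rewrite hp.
Qed.

Lemma G00 n k (e1 e2 : 'I_k -> lvec n) u : G e1 e2 u (fun _ => 0%N) (fun _ => 0%N) = u.
Proof. by rewrite /G big1 ?addr0 // => r _; rewrite !mulr0n addr0. Qed.
Unset Implicit Arguments.

Theorem mainTheorem12 (K : closedFieldType) (hK : [pchar K] =i pred0)
  (n k l : nat) (p : 'I_k -> lvec n) (q : 'I_l -> lvec n)
  (e1 e2 : 'I_k -> lvec n)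
  (hrays : ray_generators (rays p q))
  (hface : is_face p q)
  (hreg : regular p)
  (hroots : compatible_roots p q e1 e2)
  (hind : lin_indep (fun r => e2 r - e1 r))
  (x : lvec n -> K) (hx : is_point (rays p q) x) :
  (forall y : lvec n -> K, is_point (rays p q) y ->
     rmul p q e1 e2 x y = rmul p q e1 e2 y x)
  <->
  ((forall u, inS (rays p q) u -> (exists r, pair (p r) u != 0) -> x u = 0)
   /\
   (forall (r : 'I_k) (u : lvec n), inS (rays p q) u ->
      (forall j, pair (p j) u = (j == r)%:~R) ->
      x (u + e1 r) = x (u + e2 r))).
Proof.
have hx3 := let: And3 _ _ h := hx in h.
split.
- move=> Hc.
  have Hv : vanish p x.
    move=> w [r hr].
    case: (boolP (inS (rays p q) w)) => hw; last exact: hx3.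
    set a := fun s => `|pair (p s) w|%N.
    have hA : forall s, pair (p s) w = (a s)%:Z.
      by move=> s; rewrite /a gez0_abs // (inS_p s hw).
    set D := G e1 e2 w a (fun _ => 0%N) - G e1 e2 w (fun _ => 0%N) a.
    have hD : D != 0.
      apply/eqP => hD0.
      have : \sum_s (a s)%:R *: (e2 s - e1 s) = 0.
        transitivity D; last exact: hD0.
        rewrite /D /G opprD addrACA subrr add0r -sumrB; apply: eq_bigr => s _.
        by rewrite scaler_nat mulr0n addr0 add0r mulrnDl mulNrn.
      move/hind => /(_ r) /eqP; rewrite pnatr_eq0 => /eqP har.
      by move: hr; rewrite hA har eqxx.
    have [i0 hi0] : exists i0, D 0 i0 != 0.
      apply/existsP; apply: contraT; rewrite negb_exists => /forallP hall.
      case/negP: hD; apply/eqP/rowP => j.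
      by move: (hall j); rewrite negbK => /eqP ->; rewrite mxE.
    have := Hc _ (y0_point hK p q i0).
    move/(congr1 (fun f => f w)).
    rewrite (rmul_B _ hroots (@y0_vanish K _ _ _ p q i0) hw).
    rewrite (rmul_A _ hroots (@y0_vanish K _ _ _ p q i0) hw).
    have hin : forall m2 m1, (forall s, m2 s + m1 s = a s)%N ->
        y0 K p q i0 (G e1 e2 w m2 m1) = 2 ^ ((G e1 e2 w m2 m1) 0 i0).
      move=> m2 m1 hm; apply: y0_val.
        by apply: G_inS => // s; rewrite hm.
      by move=> s; rewrite (G_pair_p _ _ _ _ hroots) hm hA natz subrr.
    rewrite !hin // => [|s]; last by rewrite addn0.
    case: (eqVneq (x w) 0) => // hxw E; exfalso.
    have E' : (2:K) ^ (G e1 e2 w (fun=> 0%N) a 0 i0) = 2 ^ (G e1 e2 w a (fun=> 0%N) 0 i0).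
      by move: E; rewrite mulrC => /mulIf; apply.
    move: E'; rewrite -(subrK (G e1 e2 w (fun=> 0%N) a 0 i0) (G e1 e2 w a (fun=> 0%N) 0 i0)).
    rewrite expfzDr ?two_neq0 // -{1}[X in X = _]mul1r => /mulIf.
    rewrite expfz_neq0 ?two_neq0 // => /(_ isT) /esym /(two_pow_eq1 hK) /eqP.
    by move: hi0; rewrite /D !mxE => /negbTE ->.
  split.
    by move=> u _ hu; apply: Hv.
  move=> r v hv hpv.
  have := Hc _ (@y1_point K _ _ (rays p q)).
  move/(congr1 (fun f => f v)).
  rewrite (rmul_A _ hroots Hv hv) (rmul_B _ hroots Hv hv) /y1 hv mulr1 mul1r.
  have ha : forall s, `|pair (p s) v|%N = (s == r).
    by move=> s; rewrite hpv; case: (s == r).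
  have E2 : v + e2 r = G e1 e2 v (fun s => `|pair (p s) v|%N) (fun _ => 0%N).
    by rewrite -{1}(G00 e1 e2 v) G_add2; apply: G_ext => s //; rewrite ha.
  have E1 : v + e1 r = G e1 e2 v (fun _ => 0%N) (fun s => `|pair (p s) v|%N).
    by rewrite -{1}(G00 e1 e2 v) G_add1; apply: G_ext => s //; rewrite ha.
  by rewrite E1 E2 => ->.
- move=> [H1 H2] y hy.
  have Hv : vanish p x.
    move=> w hw; case: (boolP (inS (rays p q) w)) => hS; last exact: hx3.
    exact: H1.
  apply: functional_extensionality => u.
  case: (boolP (inS (rays p q) u)) => hu; last by rewrite /rmul (negbTE hu).
  rewrite (rmul_A _ hroots Hv hu) (rmul_B _ hroots Hv hu) mulrC.
  by rewrite (chain hroots hu H2).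
Qed.
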